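(* Let $q$ be a prime power and let $n,k$ be integers with $3\le k\le n-2\le q-2$. Let $\Lambda=\{\alpha_1,\dots,\alpha_n\}\subseteq\mathbb{F}_q$ with the $\alpha_i$ pairwise distinct, and let $C_{k-1,k-2}$ be the linear code generated by the $k\times n$ matrix whose rows are $(\alpha_1^{e},\dots,\alpha_n^{e})$ for $e=0,1,\dots,k-3,k,k+1$. Then $C_{k-1,k-2}$ is MDS if and only if $$\sigma_2(\beta_1,\dots,\beta_k)^2-\sigma_1(\beta_1,\dots,\beta_k)\,\sigma_3(\beta_1,\dots,\beta_k)\neq 0$$ for every $k$-element subset $\{\beta_1,\dots,\beta_k\}\subseteq\Lambda$ (with the $\beta_i$ distinct).
   Context: Convention: $0^0=1$. $\sigma_t(x_1,\dots,x_m)$ denotes the $t$-th elementary symmetric polynomial ($\sigma_0=1$, $\sigma_t=0$ for $t>m$). An $[n,k,d]$ linear code is MDS if $d=n-k+1$. *)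

(* Defs.v *)
From HB Require Import structures.
From mathcomp Require Import all_boot all_order all_algebra all_field.
Set Implicit Arguments. Unset Strict Implicit. Unset Printing Implicit Defensive.
Import GRing.Theory.
Local Open Scope ring_scope.

Definition wt (F : fieldType) (n : nat) (c : 'rV[F]_n) : nat :=
  #|[set j : 'I_n | c 0 j != 0]|.

(* The linear code generated by G is its row space: codewords c with (c <= G)%MS.
   Its dimension is \rank G.  Minimum distance = least weight of a nonzero
   codeword (n.+1 if there is none). *)
Definition min_dist (F : finFieldType) (m n : nat) (G : 'M[F]_(m, n)) : nat :=
  \big[minn/n.+1]_(c : 'rV[F]_n | (c <= G)%MS && (c != 0)) wt c.

Definition is_MDS (F : finFieldType) (m n : nat) (G : 'M[F]_(m, n)) : Prop :=
  min_dist G = (n - \rank G + 1)%N.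

Definition expo (k : nat) (i : nat) : nat := if (i < k - 2)%N then i else (i + 2)%N.

Definition Gmat (F : fieldType) (n k : nat) (a : 'I_n -> F) : 'M[F]_(k, n) :=
  \matrix_(i < k, j < n) a j ^+ expo k i.

Definition sigma (F : fieldType) (n : nat) (a : 'I_n -> F) (t : nat)
    (S : {set 'I_n}) : F :=
  \sum_(T : {set 'I_n} | (T \subset S) && (#|T| == t)) \prod_(j in T) a j.

(* Main.v *)
Require Import Defs.
From HB Require Import structures.
From mathcomp Require Import all_boot all_order all_algebra all_field.
From mathcomp Require Import zify ring.
Set Implicit Arguments. Unset Strict Implicit. Unset Printing Implicit Defensive.
Import GRing.Theory.
Local Open Scope ring_scope.

Section P.
Variable F : fieldType.
Variable n : nat.
Variable a : 'I_n -> F.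

Definition PS (S : {set 'I_n}) : {poly F} := \prod_(j in S) ('X - (a j)%:P).

Lemma PS_expand (S : {set 'I_n}) : PS S = \sum_(J : {set 'I_n} | J \subset S)
   ((-1) ^+ #|J| * \prod_(j in J) a j) *: 'X^(#|S| - #|J|).
Proof.
rewrite /PS.
have -> : \prod_(j in S) ('X - (a j)%:P) = \prod_j ((if j \in S then - (a j)%:P else 0) + (if j \in S then 'X else 1)).
  rewrite big_mkcond; apply eq_bigr => j _; case: (j \in S) => //=; [by rewrite [RHS]addrC | by rewrite add0r].
have E : \prod_j ((if j \in S then - (a j)%:P else 0) + (if j \in S then 'X else 1)) =
  \sum_(J : {set 'I_n}) \prod_j (if j \in J then (if j \in S then - (a j)%:P else 0) else (if j \in S then 'X else 1)).
  exact: bigA_distr.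
rewrite E (bigID (fun J : {set 'I_n} => J \subset S)) /= [X in _ + X]big1 ?addr0; last first.
  move=> J /subsetPn [j jJ jS]; rewrite (bigD1 j) //= jJ (negbTE jS) mul0r //.
apply: eq_bigr => J JS.
rewrite (bigID (mem J)) /=.
rewrite (eq_bigr (fun j => - (a j)%:P)); last first.
  by move=> j jJ; rewrite jJ (subsetP JS).
rewrite [X in _ * X](eq_bigr (fun j => if j \in S then 'X else 1)); last first.
  by move=> j jJ; rewrite (negbTE jJ).
rewrite -big_mkcondr prodr_const prodrN -rmorph_prod /= -mul_polyC rmorphM /= rmorphXn /= polyCN.
congr (_ * _ ^+ _).
rewrite -(cardsDS JS); apply: eq_card => j; rewrite !inE andbC.
by rewrite -topredE /= andbC.
Qed.

Lemma coef_PS (S : {set 'I_n}) m : (PS S)`_m = \sum_(J : {set 'I_n} | (J \subset S) && (#|S| - #|J| == m)%N)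
   (-1) ^+ #|J| * \prod_(j in J) a j.
Proof.
rewrite PS_expand coef_sum big_mkcondr /=.
apply: eq_bigr => J _; rewrite coefZ coefXn eq_sym.
by case: eqP => _; rewrite ?mulr1 ?mulr0.
Qed.

Lemma coef_PS_sigma (S : {set 'I_n}) t k : #|S| = k -> (t <= k)%N -> (PS S)`_(k - t) = (-1) ^+ t * sigma a t S.
Proof.
move=> Sk tk; rewrite coef_PS /sigma mulr_sumr.
rewrite (eq_bigl (fun J : {set 'I_n} => (J \subset S) && (#|J| == t))); last first.
  move=> J; case JS: (J \subset S) => //=.
  have := subset_leq_card JS; rewrite Sk => Jk.
  by apply/eqP/eqP => [h | ->] //; rewrite -(subKn Jk) h subKn.
by apply: eq_bigr => J /andP[_ /eqP ->].
Qed.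

Lemma PS_root (S : {set 'I_n}) j : j \in S -> (PS S).[a j] = 0.
Proof. by move=> jS; rewrite /PS horner_prod (bigD1 j) //= hornerXsubC subrr mul0r. Qed.

Lemma PS_enum (S : {set 'I_n}) : PS S = \prod_(z <- map a (enum S)) ('X - z%:P).
Proof. by rewrite big_map big_enum. Qed.

Lemma PS_monic (S : {set 'I_n}) : PS S \is monic.
Proof. by rewrite PS_enum monic_prod_XsubC. Qed.

Lemma size_PS (S : {set 'I_n}) : size (PS S) = #|S|.+1.
Proof. by rewrite PS_enum size_prod_XsubC size_map cardE. Qed.

Lemma PS_dvd (S : {set 'I_n}) f : injective a -> (forall j, j \in S -> f.[a j] = 0) -> exists g, f = g * PS S.
Proof.
move=> ai fS; rewrite PS_enum; apply: uniq_roots_prod_XsubC.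
  by apply/allP => x /mapP [j jS ->]; rewrite mem_enum in jS; apply/rootP; apply: fS.
by rewrite uniq_rootsE map_inj_uniq // enum_uniq.
Qed.

Lemma coefg g0 g1 (P : {poly F}) m : ((g0%:P + g1%:P * 'X) * P)`_m.+1 = g0 * P`_m.+1 + g1 * P`_m.
Proof. by rewrite mulrDl coefD coefCM -mulrA coefCM coefXM. Qed.

Lemma lin_form (g : {poly F}) : (size g <= 2)%N -> g = (g`_0)%:P + (g`_1)%:P * 'X.
Proof.
move=> sg; apply/polyP => i; rewrite coefD coefC coefMX coefC.
case: i => [|[|i]] /=; rewrite ?addr0 ?add0r //.
by rewrite nth_default //; apply: leq_trans sg _.
Qed.


Lemma key k (S : {set 'I_n}) : injective a -> (3 <= k)%N -> #|S| = k ->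
 (exists f : {poly F}, [/\ f != 0, (size f <= k + 2)%N, f`_(k-2) = 0, f`_(k-1) = 0
      & forall j, j \in S -> f.[a j] = 0]) <->
 sigma a 2 S ^+ 2 - sigma a 1 S * sigma a 3 S = 0.
Proof.
move=> ai k3 Sk.
have p1 : (PS S)`_(k-1) = - sigma a 1 S.
  rewrite (coef_PS_sigma Sk); last lia. by rewrite expr1 mulN1r.
have p2 : (PS S)`_(k-2) = sigma a 2 S.
  rewrite (coef_PS_sigma Sk); last lia. by rewrite expr2 mulN1r opprK mul1r.
have p3 : (PS S)`_(k-3) = - sigma a 3 S.
  by rewrite (coef_PS_sigma Sk) //; ring.
have e1 : (k - 1 = (k - 2).+1)%N by lia.
have e2 : (k - 2 = (k - 3).+1)%N by lia.
move: p1 p2 p3; move: (sigma a 1 S) (sigma a 2 S) (sigma a 3 S) => s1 s2 s3 p1 p2 p3.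
split.
  move=> [f [fn0 fsz c2 c1 fr]].
  have [g fg] := PS_dvd ai fr.
  have gn0 : g != 0 by apply: contraNneq fn0 => g0; rewrite fg g0 mul0r.
  have sg : (size g <= 2)%N.
    move: fsz; rewrite fg size_Mmonic ?PS_monic // size_PS Sk.
    have := size_poly_gt0 g; rewrite gn0 => _; move: (size g) => x; lia.
  rewrite (lin_form sg) in fg gn0.
  set g0 := g`_0 in fg gn0; set g1 := g`_1 in fg gn0.
  have E1 : g0 * - s1 + g1 * s2 = 0 by have := c1; rewrite fg e1 coefg -e1 p1 p2.
  have E2 : g0 * s2 + g1 * - s3 = 0 by have := c2; rewrite fg e2 coefg -e2 p2 p3.
  have h0 : g0 * (s2 ^+ 2 - s1 * s3) = 0.
    transitivity (s2 * (g0 * s2 + g1 * - s3) + s3 * (g0 * - s1 + g1 * s2)); first by ring.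
    by rewrite E1 E2; ring.
  have h1 : g1 * (s2 ^+ 2 - s1 * s3) = 0.
    transitivity (s2 * (g0 * - s1 + g1 * s2) + s1 * (g0 * s2 + g1 * - s3)); first by ring.
    by rewrite E1 E2; ring.
  case: (eqVneq g0 0) => [g00 | g0n]; last by move/eqP: h0; rewrite mulf_eq0 (negbTE g0n) => /eqP.
  case: (eqVneq g1 0) => [g10 | g1n]; last by move/eqP: h1; rewrite mulf_eq0 (negbTE g1n) => /eqP.
  by move: gn0; rewrite g00 g10 mul0r addr0 eqxx.
move=> D0.
pose g0 := if (s1 == 0) && (s2 == 0) then 1 else s2.
pose g1 := if (s1 == 0) && (s2 == 0) then 0 else s1.
have gnz : (g0 != 0) || (g1 != 0).
  rewrite /g0 /g1; case: ifP => [_|/negbT]; first by rewrite oner_eq0.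
  by rewrite negb_and orbC.
have E1 : g0 * - s1 + g1 * s2 = 0.
  rewrite /g0 /g1; case: ifP => [/andP[/eqP -> /eqP ->]|_]; first by ring.
  by ring.
have E2 : g0 * s2 + g1 * - s3 = 0.
  rewrite /g0 /g1; case: ifP => [/andP[_ /eqP ->]|_]; first by ring.
  by rewrite -D0; ring.
clearbody g0 g1.
exists ((g0%:P + g1%:P * 'X) * PS S); split.
- have gn : g0%:P + g1%:P * 'X != 0.
    apply/eqP => gz.
    have c0 := congr1 (fun p : {poly F} => p`_0) gz.
    have c1 := congr1 (fun p : {poly F} => p`_1) gz.
    rewrite /= coef0 coefD coefC coefMX /= addr0 in c0.
    rewrite /= coef0 coefD coefC coefMX coefC /= add0r in c1.
    by move: gnz; rewrite c0 c1 eqxx.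
  by rewrite mulf_neq0 // monic_neq0 // PS_monic.
- apply: leq_trans (size_polyMleq _ _) _; rewrite size_PS Sk.
  have : (size ((g0%:P + g1%:P * 'X)%R) <= 2)%N.
    apply: leq_trans (size_polyD _ _) _; rewrite geq_max; apply/andP; split.
      by apply: leq_trans (size_polyC_leq1 _) _.
    apply: leq_trans (size_polyMleq _ _) _; rewrite size_polyX.
    by have := size_polyC_leq1 g1; move: (size _) => x; lia.
  by move: (size _) => x; lia.
- by rewrite e2 coefg -e2 p2 p3.
- by rewrite e1 coefg -e1 p1 p2.
- by move=> j jS; rewrite hornerM PS_root // mulr0.
Qed.

End P.

Section Code.
Variable F : finFieldType.
Variables n k : nat.
Variable a : 'I_n -> F.
Hypothesis ai : injective a.
Hypothesis k3 : (3 <= k)%N.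
Hypothesis kn : (k + 2 <= n)%N.

Lemma expo_lt (i : 'I_k) : (expo k i <= k + 1)%N.
Proof. rewrite /expo; have := ltn_ord i; case: (ltnP i (k - 2)) => h /= h2; lia. Qed.

Lemma expo_inj (i i' : 'I_k) : expo k i = expo k i' -> i = i'.
Proof.
move=> h; apply: val_inj; move: h; rewrite /expo; have := ltn_ord i; have := ltn_ord i'.
case: (ltnP i (k - 2)); case: (ltnP i' (k - 2)) => /=; lia.
Qed.

Definition pu (u : 'rV[F]_k) : {poly F} := \sum_(i < k) u 0 i *: 'X^(expo k i).

Lemma coef_pu (u : 'rV[F]_k) m : (pu u)`_m = \sum_(i < k) u 0 i * (m == expo k i)%:R.
Proof. by rewrite coef_sum; apply: eq_bigr => i _; rewrite coefZ coefXn. Qed.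

Lemma coef_pu_expo (u : 'rV[F]_k) (i : 'I_k) : (pu u)`_(expo k i) = u 0 i.
Proof.
rewrite coef_pu (bigD1 i) //= eqxx mulr1 big1 ?addr0 // => i' ne.
case: eqP => [/expo_inj h|_]; last by rewrite mulr0.
by rewrite h eqxx in ne.
Qed.

Lemma coef_pu_out (u : 'rV[F]_k) m : (forall i : 'I_k, m != expo k i) -> (pu u)`_m = 0.
Proof. by move=> H; rewrite coef_pu big1 // => i _; rewrite (negbTE (H i)) mulr0. Qed.

Lemma size_pu (u : 'rV[F]_k) : (size (pu u) <= k + 2)%N.
Proof.
apply/leq_sizeP => m hm; apply: coef_pu_out => i; apply/eqP => e.
by have := expo_lt i; rewrite -e; lia.
Qed.

Lemma pu_eval (u : 'rV[F]_k) (j : 'I_n) : (u *m (@Gmat F n k a)) 0 j = (pu u).[a j].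
Proof.
by rewrite mxE horner_sum; apply: eq_bigr => i _; rewrite mxE hornerZ hornerXn.
Qed.

Lemma pu0 (u : 'rV[F]_k) : pu u = 0 -> u = 0.
Proof. by move=> h; apply/rowP => i; rewrite mxE -(coef_pu_expo u i) h coef0. Qed.

Lemma pu_zero : pu 0 = 0.
Proof. by rewrite /pu big1 // => i _; rewrite mxE scale0r. Qed.

Lemma pu_surj (f : {poly F}) : (size f <= k + 2)%N -> f`_(k-2) = 0 -> f`_(k-1) = 0 ->
  exists u, pu u = f.
Proof.
move=> fs c2 c1; exists (\row_i f`_(expo k i)); apply/polyP => m.
case: (pickP (fun i : 'I_k => m == expo k i)) => [i /eqP -> | none].
  by rewrite coef_pu_expo mxE.
rewrite coef_pu_out; last by move=> i; rewrite none.
have [lt|ge] := ltnP m (k - 2)%N.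
  have mk : (m < k)%N by lia.
  by move: (none (Ordinal mk)); rewrite /expo /= lt eqxx.
have [e|ne] := eqVneq m (k - 2)%N; first by rewrite e.
have [e'|ne'] := eqVneq m (k - 1)%N; first by rewrite e'.
have [lt2|ge2] := ltnP m (k + 2)%N.
  have mk : (m - 2 < k)%N by lia.
  move: (none (Ordinal mk)); rewrite /expo /=.
  have -> : (m - 2 < k - 2)%N = false by apply/negbTE; rewrite -leqNgt; lia.
  by rewrite subnK ?eqxx //; lia.
by rewrite nth_default //; apply: leq_trans fs ge2.
Qed.

Lemma few_roots (f : {poly F}) : f != 0 -> (size f <= k + 2)%N ->
  (#|[set j | (f.[a j] == 0)%R]| <= k + 1)%N.
Proof.
move=> fn0 fs; set Z := [set j | _].
have := @max_poly_roots _ f (map a (enum Z)) fn0.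
rewrite size_map -cardE => H.
have : (#|Z| < size f)%N.
  apply: H; last by rewrite map_inj_uniq // enum_uniq.
  by apply/allP => x /mapP [j jZ ->]; rewrite mem_enum inE in jZ; exact/rootP/eqP.
by move=> h; have := leq_trans h fs; lia.
Qed.

Lemma pu_nonvanish (u : 'rV[F]_k) : u != 0 -> exists j, (pu u).[a j] != 0.
Proof.
move=> un0; have pn : pu u != 0 by apply: contraNneq un0 => /pu0 ->.
case: (pickP (fun j => (pu u).[a j] != 0)) => [j hj | none]; first by exists j.
have := few_roots pn (size_pu u).
have -> : [set j | (pu u).[a j] == 0] = [set: 'I_n].
  by apply/setP => j; rewrite !inE; apply/negbFE/none.
by rewrite cardsT card_ord; lia.
Qed.

Lemma cw_nz (u : 'rV[F]_k) : u != 0 -> u *m (@Gmat F n k a) != 0.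
Proof.
move=> un0; have [j hj] := pu_nonvanish un0; apply/eqP => h.
by move: hj; rewrite -pu_eval h mxE eqxx.
Qed.

Lemma kern_exists m (A : 'M[F]_(k, m)) : (m < k)%N -> exists2 u : 'rV_k, u != 0 & u *m A = 0.
Proof.
move=> mk; set K := kermx A.
have : \rank K != 0%N by rewrite mxrank_ker; have := rank_leq_col A; lia.
rewrite mxrank_eq0 => Kn0.
case: (pickP (fun i => row i K != 0)) => [i hi | none].
  by exists (row i K) => //; rewrite -row_mul mulmx_ker row0.
case/negP: Kn0; apply/eqP/row_matrixP => i; rewrite row0; apply/eqP; exact: negbFE (none i).
Qed.

Lemma rankG : \rank ((@Gmat F n k a)) = k.
Proof.
apply/eqP; rewrite eqn_leq rank_leq_row /=.
have : kermx ((@Gmat F n k a)) = 0.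
  apply/row_matrixP => i; rewrite row0; apply/eqP/negPn/negP => hi.
  have := cw_nz hi; rewrite -row_mul mulmx_ker row0 eqxx //.
move/(congr1 mxrank); rewrite mxrank_ker mxrank0 => /eqP; rewrite subn_eq0 //.
Qed.

Lemma wt_pu (u : 'rV[F]_k) : wt (u *m (@Gmat F n k a)) = (n - #|[set j | ((pu u).[a j] == 0)%R]|)%N.
Proof.
rewrite /wt; set Z := [set j | _].
have -> : [set j | (u *m (@Gmat F n k a)) 0 j != 0] = ~: Z by apply/setP => j; rewrite !inE pu_eval.
by have h := cardsC Z; rewrite card_ord in h; move: h; move: (#|Z|) (#|~: Z|) => x y; lia.
Qed.

Lemma sub_k (Z : {set 'I_n}) : (k <= #|Z|)%N -> exists S : {set 'I_n}, S \subset Z /\ #|S| = k.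
Proof.
move=> kZ; exists [set x in take k (enum Z)]; split.
  by apply/subsetP => x; rewrite inE => /mem_take; rewrite mem_enum.
rewrite cardsE (card_uniqP (take_uniq _ (enum_uniq _))).
by rewrite size_takel // -cardE.
Qed.

Lemma min_le m (G : 'M[F]_(m, n)) c : (c <= G)%MS -> c != 0 -> (min_dist G <= wt c)%N.
Proof.
move=> cG cn; rewrite /min_dist.
have : c \in index_enum 'rV[F]_n by rewrite mem_index_enum.
elim: (index_enum _) => [//|x r IH]; rewrite inE big_cons.
case/orP => [/eqP <-| cr]; first by rewrite cG cn /= geq_minl.
by case: ifP => _; [rewrite geq_min (IH cr) orbT | exact: IH cr].
Qed.

Lemma min_ge m (G : 'M[F]_(m, n)) b : (forall c, (c <= G)%MS -> c != 0 -> (b <= wt c)%N) ->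
  (b <= n.+1)%N -> (b <= min_dist G)%N.
Proof.
move=> H bn; rewrite /min_dist; apply: (big_ind (fun x => b <= x)%N) => //.
  by move=> x y hx hy; rewrite leq_min hx hy.
by move=> c /andP [cG cn]; apply: H.
Qed.

End Code.


Theorem corollary3p5 (F : finFieldType) (q n k : nat) (a : 'I_n -> F) :
  #|F| = q ->
  (3 <= k)%N -> (k + 2 <= n)%N -> (n <= q)%N ->
  injective a ->
  is_MDS (@Gmat F n k a) <->
  (forall S : {set 'I_n}, #|S| = k ->
     sigma a 2 S ^+ 2 - sigma a 1 S * sigma a 3 S != 0).
Proof.
move=> _ k3 kn _ ai.
rewrite /is_MDS (rankG ai k3 kn); split.
- move=> mds S Sk; apply/eqP => D0.
  have [f [fn0 fs c2 c1 fr]] := (key ai k3 Sk).2 D0.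
  have [u pf] := pu_surj k3 kn fs c2 c1.
  have un0 : u != 0 by apply: contraNneq fn0 => u0; rewrite -pf u0 pu_zero.
  have := min_le (submxMl u (@Gmat F n k a)) (cw_nz ai k3 kn un0).
  rewrite mds (wt_pu a k3 kn).
  have : (k <= #|[set j | ((pu u).[a j] == 0)%R]|)%N.
    rewrite -[X in (X <= _)%N]Sk; apply: subset_leq_card; apply/subsetP => j jS.
    by rewrite inE pf fr.
  move: (#|_|) => x; lia.
- move=> cond; apply/eqP; rewrite eqn_leq; apply/andP; split.
  + have hk : (k.-1 <= n)%N by lia.
    pose A := \matrix_(i < k, j < k.-1) (@Gmat F n k a) i (widen_ord hk j).
    have hk2 : (k.-1 < k)%N by rewrite ltn_predL; lia.
    have [u un0 uA] := kern_exists k3 kn A hk2.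
    have := min_le (submxMl u (@Gmat F n k a)) (cw_nz ai k3 kn un0).
    rewrite (wt_pu a k3 kn) => h; apply: leq_trans h _.
    have : (k.-1 <= #|[set j | ((pu u).[a j] == 0)%R]|)%N.
      have -> : k.-1 = #|[set widen_ord hk j | j : 'I_k.-1]|.
        rewrite card_imset ?card_ord //.
        by move=> x y /(congr1 val) /= h; apply: val_inj.
      apply: subset_leq_card; apply/subsetP => j /imsetP [j' _ ->].
      rewrite inE -pu_eval.
      have e : (u *m A) 0 j' = 0 by rewrite uA mxE.
      rewrite -e !mxE; apply/eqP; apply: eq_bigr => i _; rewrite mxE.
      by rewrite /A !mxE.
    move: (#|_|) => x; lia.
  + apply: min_ge; last by lia.
    move=> c /submxP [u ->] cn0.
    have un0 : u != 0 by apply: contraNneq cn0 => ->; rewrite mul0mx.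
    rewrite (wt_pu a k3 kn).
    suff : (#|[set j | ((pu u).[a j] == 0)%R]| < k)%N by move: (#|_|) => x; lia.
    rewrite ltnNge; apply/negP => /sub_k [S [SZ Sk]].
    have := cond S Sk; apply/negP; rewrite negbK; apply/eqP.
    apply: (key ai k3 Sk).1; exists (pu u); split.
    * by apply: contraNneq un0 => /(pu0 k3 kn) ->.
    * exact: size_pu k3 kn u.
    * by apply: coef_pu_out => i; apply/eqP; rewrite /expo; have := ltn_ord i; case: (ltnP i (k - 2)%N) => h1 h2 e; lia.
    * by apply: coef_pu_out => i; apply/eqP; rewrite /expo; have := ltn_ord i; case: (ltnP i (k - 2)%N) => h1 h2 e; lia.
    * by move=> j jS; apply/eqP; have := subsetP SZ j jS; rewrite inE.
Qed.
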